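(* Let $C$ be a closed subset of the complete Riemannian manifold $(M,g)$, let $t,s>0$ and $y\in M$, and define $\varphi_{t,s,y}:M\to\mathbb{R}$ by $\varphi_{t,s,y}(x)=\dfrac{d_C(x)^2}{2(t+s)}-\dfrac{d(y,x)^2}{2s}$. If $x\in M$ satisfies $\varphi_{t,s,y}(x)\ge\varphi_{t,s,y}(y)$, then $$d(x,y)\le\frac{2s}{t}d_C(y)\quad\text{and}\quad d_C(x)\le\Big(1+\frac{2s}{t}\Big)d_C(y).$$
   Context: $d$ is the Riemannian distance of $g$ and $d_C(x)=\inf_{c\in C}d(c,x)$. *)

(* Defs.v *)
From mathcomp Require Import all_boot all_order all_algebra.
From mathcomp Require Import all_classical all_reals.
Set Implicit Arguments. Unset Strict Implicit. Unset Printing Implicit Defensive.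
Import Order.TTheory GRing.Theory Num.Theory.
Local Open Scope ring_scope.
Local Open Scope classical_set_scope.

(* The Riemannian distance d of (M,g) is modelled as an abstract metric on M. *)
Record is_metric (R : realType) (T : Type) (d : T -> T -> R) : Prop := {
  metric_ge0 : forall x y, 0 <= d x y;
  metric_eq0 : forall x y, d x y = 0 <-> x = y;
  metric_sym : forall x y, d x y = d y x;
  metric_tri : forall x y z, d x z <= d x y + d y z }.

Definition metric_complete (R : realType) (T : Type) (d : T -> T -> R) : Prop :=
  forall u : nat -> T,
    (forall e : R, 0 < e -> exists N : nat, forall m n : nat,
        (N <= m)%N -> (N <= n)%N -> d (u m) (u n) < e) ->
    exists l : T, forall e : R, 0 < e -> exists N : nat, forall n : nat,
        (N <= n)%N -> d (u n) l < e.

Definition metric_closed (R : realType) (T : Type) (d : T -> T -> R) (C : set T) : Prop :=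
  forall x : T, (forall e : R, 0 < e -> exists c, C c /\ d c x < e) -> C x.

Definition distC (R : realType) (T : Type) (d : T -> T -> R) (C : set T) (x : T) : R :=
  inf [set d c x | c in C].

Definition phi (R : realType) (T : Type) (d : T -> T -> R) (C : set T)
    (t s : R) (y x : T) : R :=
  (distC d C x) ^+ 2 / (2 * (t + s)) - (d y x) ^+ 2 / (2 * s).

(* Main.v *)
Require Import Defs.
From mathcomp Require Import all_boot all_order all_algebra.
From mathcomp Require Import all_classical all_reals.
From mathcomp Require Import lra.
Import Order.TTheory GRing.Theory Num.Theory.
Local Open Scope ring_scope.
Local Open Scope classical_set_scope.

Lemma distC_ge0 (R : realType) (M : Type) (d : M -> M -> R)
  (hd : is_metric d) (C : set M) (hCne : C !=set0) z : 0 <= distC d C z.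
Proof.
rewrite /distC; apply: lb_le_inf.
  have [c Hc] := hCne; by exists (d c z); exists c.
by move=> _ [c _ <-]; exact: (metric_ge0 hd).
Qed.

Lemma distC_lip (R : realType) (M : Type) (d : M -> M -> R)
  (hd : is_metric d) (C : set M) (hCne : C !=set0) x y :
  distC d C x <= distC d C y + d x y.
Proof.
rewrite -lerBlDr /distC; apply: lb_le_inf.
  have [c Hc] := hCne; by exists (d c y); exists c.
move=> _ [c Hc <-]; rewrite lerBlDr.
have h1 : inf [set d c0 x | c0 in C] <= d c x.
  apply: ge_inf; last by exists c.
  by exists 0 => _ [c' _ <-]; exact: (metric_ge0 hd).
have h2 := metric_tri hd c y x.
have h3 := metric_sym hd x y.
lra.
Qed.

Theorem lemma7p1 (R : realType) (M : Type) (d : M -> M -> R)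
  (hd : is_metric d) (hcompl : metric_complete d)
  (C : set M) (hC : metric_closed d C) (hCne : C !=set0)
  (t s : R) (ht : 0 < t) (hs : 0 < s) (y x : M)
  (hphi : phi d C t s y y <= phi d C t s y x) :
  d x y <= (2 * s / t) * distC d C y /\
  distC d C x <= (1 + 2 * s / t) * distC d C y.
Proof.
move: hphi; rewrite /phi.
have -> : d y y = 0 by apply/(metric_eq0 hd).
rewrite (metric_sym hd y x).
have hb : 0 <= distC d C y by exact: distC_ge0.
have hr : 0 <= d x y by exact: (metric_ge0 hd).
have hab : distC d C x <= distC d C y + d x y by exact: distC_lip.
have ha : 0 <= distC d C x by exact: distC_ge0.
move: hb hr hab ha.
set a := distC d C x; set b := distC d C y; set r := d x y.
move=> hb hr hab ha H.
have hts : 0 < 2 * (t + s) by lra.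
have h2s : 0 < 2 * s by lra.
have H2 : r ^+ 2 / (2 * s) <= (2 * b * r + r ^+ 2) / (2 * (t + s)).
  have hsq : a ^+ 2 <= (b + r) ^+ 2 by rewrite ler_sqr ?nnegrE //; lra.
  have : r ^+ 2 / (2 * s) <= a ^+ 2 / (2 * (t + s)) - b ^+ 2 / (2 * (t + s)).
    move: H; rewrite expr0n /= mul0r subr0; lra.
  move/le_trans; apply.
  rewrite -mulrBl ler_pM2r ?invr_gt0 //.
  rewrite sqrrD in hsq; lra.
move: H2; rewrite ler_pdivrMr // mulrAC ler_pdivlMr // => H3.
have key : r * r * t <= 2 * s * b * r by nra.
have key2 : r * t <= 2 * s * b.
  have [r0|rpos] := eqVneq r 0.
    rewrite r0 mul0r; nra.
  have rp : 0 < r by rewrite lt_neqAle eq_sym rpos.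
  have e1 : r * r * t = r * (r * t) by rewrite mulrA.
  have e2 : 2 * s * b * r = r * (2 * s * b) by rewrite mulrC.
  by move: key; rewrite e1 e2 ler_pM2l.
have hr' : r <= 2 * s / t * b.
  by rewrite mulrAC ler_pdivlMr.
split=> //.
rewrite mulrDl mul1r; lra.
Qed.
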